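(* Let $p$ be a prime, $q$ a power of $p$, $U\in\mathcal A_m^*$, $\sigma:\mathcal A_m\to\mathcal A_m^*$ a $p$-uniform morphism and $\varphi:\mathcal A_m\to\mathbb{F}_q$ a coding. Let $t\in\mathbb{N}^*$, $r=p^t$, and $\alpha\in\mathbb{F}_r$ (with $\mathbb{F}_q$ and $\mathbb{F}_r$ inside a common algebraic closure of $\mathbb{F}_p$). Then the sequence $\big(P_{\varphi(\sigma^n(U))}(\alpha)\big)_{n\ge0}$ is ultimately periodic.
   Context: $\mathcal A_m=\{0,\dots,m-1\}$. A $p$-uniform morphism sends each letter to a word of length $p$ and acts on words by concatenation; a coding is a letter-to-letter map applied letterwise. For a word $W=w_0\cdots w_{s-1}$ over $\mathbb{F}_q$, $P_W(T)=\sum_{j=0}^{s-1}w_{s-1-j}T^j\in\mathbb{F}_q[T]$. *)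

(* Defs.v *)
From HB Require Import structures.
From mathcomp Require Import all_boot all_order all_algebra.
Set Implicit Arguments. Unset Strict Implicit. Unset Printing Implicit Defensive.
Import GRing.Theory.
Local Open Scope ring_scope.

(* Alphabet A_m = 'I_m ; words = seq 'I_m. *)

Definition uniform_morphism (m p : nat) (sigma : 'I_m -> seq 'I_m) : Prop :=
  forall a : 'I_m, size (sigma a) = p.

Definition morph_word (m : nat) (sigma : 'I_m -> seq 'I_m) (w : seq 'I_m) :
  seq 'I_m := flatten (map sigma w).

Definition polW (R : nzRingType) (W : seq R) : {poly R} :=
  \sum_(j < size W) W`_(size W - 1 - j) *: 'X^j.

Definition ultimately_periodic (T : Type) (u : nat -> T) : Prop :=
  exists N P : nat, (0 < P)%N /\ forall n, (N <= n)%N -> u (n + P)%N = u n.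

(* Main.v *)
Require Import Defs.
From HB Require Import structures.
From mathcomp Require Import all_boot all_order all_algebra.
From mathcomp Require Import zify ring.
Local Open Scope ring_scope.
Import GRing.Theory.

Section Aux.
Variable L : closedFieldType.
Variable m : nat.

Fixpoint V (f : 'I_m -> L) (b : L) (W : seq 'I_m) : L :=
  match W with [::] => 0 | a :: W' => f a * b ^+ size W' + V f b W' end.

Lemma V_cat f b A B : V f b (A ++ B) = V f b A * b ^+ size B + V f b B.
Proof.
elim: A => [|a A IH] /=; first by rewrite mul0r add0r.
rewrite IH size_cat exprD; ring.
Qed.

Lemma size_morph p (sigma : 'I_m -> seq 'I_m) W :
  uniform_morphism p sigma -> size (morph_word sigma W) = (p * size W)%N.
Proof.
move=> Hs; elim: W => [|a W IH]; first by rewrite /morph_word /= muln0.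
rewrite /morph_word /= size_cat -/(morph_word sigma W) IH Hs /=; lia.
Qed.

Lemma V_morph p (sigma : 'I_m -> seq 'I_m) f b W :
  uniform_morphism p sigma ->
  V f b (morph_word sigma W) = V (fun a => V f b (sigma a)) (b ^+ p) W.
Proof.
move=> Hs; elim: W => [|a W IH]; first by [].
rewrite /morph_word /= -/(morph_word sigma W) V_cat IH (size_morph _ _ _ Hs) exprM.
by [].
Qed.

Lemma polW_cons (R : nzRingType) (x : R) W :
  polW (x :: W) = x *: 'X^(size W) + polW W.
Proof.
rewrite /polW /= big_ord_recr /= addrC subn1 /= subnn; congr (_ + _).
apply: eq_bigr => i _ /=.
have -> : (size W - i = (size W - 1 - i).+1)%N by have := ltn_ord i; lia.
by [].
Qed.

Lemma polW_eval (phi : 'I_m -> L) alpha W :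
  (polW (map phi W)).[alpha] = V phi alpha W.
Proof.
elim: W => [|a W IH]; first by rewrite /polW big_ord0 horner0.
by rewrite map_cons polW_cons hornerD hornerZ hornerXn IH size_map.
Qed.

End Aux.
Arguments V {L m}.

Lemma eq_V (L : closedFieldType) m (f g : 'I_m -> L) b W :
  (forall a, f a = g a) -> V f b W = V g b W.
Proof. by move=> H; elim: W => //= a W ->; rewrite H. Qed.

Lemma pow_iter (L : closedFieldType) (x : L) n j : x ^+ n = x -> x ^+ (n ^ j)%N = x.
Proof.
move=> H; elim: j => [|j IH]; first by rewrite expn0 expr1.
by rewrite expnSr exprM IH H.
Qed.

Theorem proposition4p15
  (p q : nat) (L : closedFieldType) (m : nat)
  (Hp : prime p) (HpL : p \in [pchar L])
  (Hq : exists k : nat, (0 < k)%N /\ q = (p ^ k)%N)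
  (U : seq 'I_m) (sigma : 'I_m -> seq 'I_m) (Hsigma : uniform_morphism p sigma)
  (phi : 'I_m -> L) (Hphi : forall a : 'I_m, phi a ^+ q = phi a)
  (t : nat) (Ht : (0 < t)%N) (alpha : L) (Halpha : alpha ^+ (p ^ t)%N = alpha) :
  ultimately_periodic
    (fun n : nat => (polW (map phi (iter n (morph_word sigma) U))).[alpha]).
Proof.
case: Hq => k [Hk Eq]; subst q.
set K := (p ^ (k * t))%N.
have HK1 : (1 < K)%N.
  have := prime_gt1 Hp => Hp1.
  rewrite /K; have : (0 < k * t)%N by rewrite muln_gt0 Hk Ht.
  case: (k * t)%N => // n _; rewrite expnS.
  have : (0 < p ^ n)%N by rewrite expn_gt0 ltnW.
  nia.
pose Fin (x : L) := x ^+ K = x.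
have Fin_alpha : Fin alpha by rewrite /Fin /K mulnC expnM pow_iter.
have Fin_phi a : Fin (phi a) by rewrite /Fin /K expnM pow_iter.
have Fin0 : Fin 0 by rewrite /Fin expr0n eqn0Ngt (ltnW HK1).
have FinD x y : Fin x -> Fin y -> Fin (x + y).
  move=> Hx Hy; rewrite /Fin exprDn_pchar ?Hx ?Hy //.
  by rewrite /K pnatX (pnatE _ Hp) HpL.
have FinM x y : Fin x -> Fin y -> Fin (x * y).
  by move=> Hx Hy; rewrite /Fin exprMn Hx Hy.
have FinX x n : Fin x -> Fin (x ^+ n).
  by move=> Hx; rewrite /Fin exprAC Hx.
have FinV (f : 'I_m -> L) b W : (forall a, Fin (f a)) -> Fin b -> Fin (V f b W).
  move=> Hf Hb; elim: W => [|a W IH] //=.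
  by apply: FinD => //; apply: FinM => //; apply: FinX.
pose ST := ({ffun 'I_m -> L} * L)%type.
pose S (st : ST) : ST := ([ffun a => V st.1 st.2 (sigma a)], st.2 ^+ p).
pose st0 : ST := ([ffun a => phi a], alpha).
pose FinS (st : ST) := (forall a, Fin (st.1 a)) /\ Fin st.2.
have FinSS st : FinS st -> FinS (S st).
  move=> [H1 H2]; split => [a|] /=; last exact: FinX.
  by rewrite ffunE; apply: FinV.
have FinSn n : FinS (iter n S st0).
  elim: n => [|n IH] /=; last exact: FinSS.
  by split => // a; rewrite ffunE.
have key n (st : ST) : V st.1 st.2 (iter n (morph_word sigma) U) =
    V (iter n S st).1 (iter n S st).2 U.
  elim: n st => [|n IH] st //.
  rewrite iterS (V_morph _ _ _ _ _ _ _ Hsigma) iterSr -IH /=.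
  by apply: eq_V => a; rewrite ffunE.
have uE n : (polW (map phi (iter n (morph_word sigma) U))).[alpha] =
    V (iter n S st0).1 (iter n S st0).2 U.
  by rewrite polW_eval -key; apply: eq_V => a; rewrite ffunE.
have [r Hr] := closed_field_poly_normal ('X^K - 'X : {poly L}).
have Pnz : ('X^K - 'X : {poly L}) != 0.
  apply/eqP => /(congr1 (fun P : {poly L} => P`_K)).
  rewrite coefB coefXn coefX eqxx coef0.
  have -> : (K == 1%N) = false by apply/eqP => E; rewrite E in HK1.
  by rewrite subr0 => /eqP; rewrite oner_eq0.
have inr x : Fin x -> x \in r.
  move=> Hx; rewrite -root_prod_XsubC.
  have : root ('X^K - 'X : {poly L}) x by rewrite /root !hornerE Hx subrr.
  rewrite {1}Hr rootZ //; rewrite lead_coef_eq0 //.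
pose n' := size r.
pose T : finType := ({ffun 'I_m -> 'I_n'.+1} * 'I_n'.+1)%type.
pose code (st : ST) : T :=
  ([ffun a => inord (index (st.1 a) r)], inord (index st.2 r)).
have code_inj st st' : FinS st -> FinS st' -> code st = code st' -> st = st'.
  case: st => f b; case: st' => f' b' [/= Hf Hb] [/= Hf' Hb'] Ec.
  have iE x y : Fin x -> Fin y ->
      (inord (index x r) : 'I_n'.+1) = inord (index y r) -> x = y.
    move=> Hx Hy /(congr1 val) /=; rewrite !inordK ?ltnS ?index_size // => E.
    by rewrite -(nth_index 0 (inr _ Hx)) E nth_index //; apply: inr.
  congr (_, _); last first.
    by apply: iE => //; have := congr1 (fun st : T => st.2) Ec.
  apply/ffunP => a; apply: iE; [exact: Hf|exact: Hf'|].
  have := congr1 (fun st : T => st.1 a) Ec; rewrite /code /fst !ffunE. done.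
pose s := map (fun n => code (iter n S st0)) (iota 0 (#|T|.+1)).
have nu : ~~ uniq s.
  apply/negP => /card_uniqP; rewrite size_map size_iota => E.
  by have := max_card (mem s); rewrite E ltnn.
have [i [j [lij ljs Eij]]] := uniqPn (code st0) nu.
rewrite size_map size_iota in ljs.
rewrite !(nth_map 0) ?size_iota ?(ltn_trans lij) // !nth_iota ?(ltn_trans lij) //
  !add0n in Eij.
have Est := code_inj _ _ (FinSn i) (FinSn j) Eij.
exists i, (j - i)%N; split; first by rewrite subn_gt0.
move=> n Hn; rewrite !uE.
have -> : iter (n + (j - i)) S st0 = iter n S st0; last by [].
have -> : (n + (j - i) = (n - i) + j)%N by lia.
rewrite iterD -Est -iterD; congr iter; lia.
Qed.
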